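(* Let $n\ge1$ and let $\Phi:\mathbb{R}^{n+1}\to[0,+\infty)$ be a norm, and set $\psi(\widehat\xi):=\Phi(\widehat\xi,0)$ for $\widehat\xi\in\mathbb{R}^n$. Then $\Phi$ is partially monotone if and only if there exists a positively one-homogeneous convex function $\omega:[0,+\infty)\times[0,+\infty)\to[0,+\infty)$ with $\omega(1,0)>0$, $\omega(0,1)>0$ and $\omega(s_1,s_2)\le\omega(t_1,t_2)$ whenever $0\le s_i\le t_i$, $i=1,2$, such that $\Phi(\widehat\xi,\xi_{n+1})=\omega(\psi(\widehat\xi),|\xi_{n+1}|)$ for all $(\widehat\xi,\xi_{n+1})\in\mathbb{R}^{n+1}$.
   Context: A norm on $\mathbb{R}^m$ is a convex function $\Psi:\mathbb{R}^m\to[0,+\infty)$ with $\Psi(\lambda\xi)=|\lambda|\Psi(\xi)$ and $\Psi(\xi)\ge c|\xi|$ for some $c>0$. The norm $\Phi$ on $\mathbb{R}^{n+1}$ is partially monotone if for all $(\widehat\xi,\xi_{n+1}),(\widehat\eta,\eta_{n+1})\in\mathbb{R}^{n+1}$: $\Phi(\widehat\xi,0)\le\Phi(\widehat\eta,0)$ and $\Phi(0,\xi_{n+1})\le\Phi(0,\eta_{n+1})$ imply $\Phi(\widehat\xi,\xi_{n+1})\le\Phi(\widehat\eta,\eta_{n+1})$. *)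

(* Defs.v *)
From HB Require Import structures.
From mathcomp Require Export all_boot all_order all_algebra.
From mathcomp Require Export reals.
Set Implicit Arguments. Unset Strict Implicit. Unset Printing Implicit Defensive.
Import Order.TTheory GRing.Theory Num.Theory.
Local Open Scope ring_scope.

(* Euclidean norm |xi| on R^m, with R^m represented as row vectors 'rV_m. *)
Definition eucl_norm (R : realType) (m : nat) (v : 'rV[R]_m) : R :=
  Num.sqrt (\sum_(i < m) (v 0 i) ^+ 2).

Definition is_norm (R : realType) (m : nat) (Psi : 'rV[R]_m -> R) : Prop :=
  [/\ (forall x, 0 <= Psi x),
      (forall (x y : 'rV[R]_m) (t : R), 0 <= t -> t <= 1 ->
          Psi (t *: x + (1 - t) *: y) <= t * Psi x + (1 - t) * Psi y),
      (forall (l : R) x, Psi (l *: x) = `|l| * Psi x) &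
      (exists2 c : R, 0 < c & forall x, c * eucl_norm x <= Psi x)].

Definition pt (R : realType) (n : nat) (xh : 'rV[R]_n) (s : R) : 'rV[R]_(n + 1) :=
  row_mx xh (\row_(i < 1) s).

Definition partially_monotone (R : realType) (n : nat)
  (Phi : 'rV[R]_(n + 1) -> R) : Prop :=
  forall (xh yh : 'rV[R]_n) (s t : R),
    Phi (pt xh 0) <= Phi (pt yh 0) ->
    Phi (pt 0 s) <= Phi (pt 0 t) ->
    Phi (pt xh s) <= Phi (pt yh t).

(* Properties of omega : [0,+oo) x [0,+oo) -> [0,+oo), represented as R -> R -> R
   with all conditions imposed on the closed quadrant only. *)
Definition quadrant_ok (R : realType) (omega : R -> R -> R) : Prop :=
  [/\ (forall s1 s2, 0 <= s1 -> 0 <= s2 -> 0 <= omega s1 s2),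
      (forall l s1 s2, 0 < l -> 0 <= s1 -> 0 <= s2 ->
          omega (l * s1) (l * s2) = l * omega s1 s2),
      (forall s1 s2 t1 t2 a, 0 <= s1 -> 0 <= s2 -> 0 <= t1 -> 0 <= t2 ->
          0 <= a -> a <= 1 ->
          omega (a * s1 + (1 - a) * t1) (a * s2 + (1 - a) * t2)
            <= a * omega s1 s2 + (1 - a) * omega t1 t2),
      0 < omega 1 0 /\ 0 < omega 0 1 &
      (forall s1 s2 t1 t2, 0 <= s1 -> s1 <= t1 -> 0 <= s2 -> s2 <= t2 ->
          omega s1 s2 <= omega t1 t2)].

(* Main.v *)
Require Import Defs.
From HB Require Import structures.
From mathcomp Require Import all_boot all_order all_algebra reals.
Import Order.TTheory GRing.Theory Num.Theory.
Local Open Scope ring_scope.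

Lemma eucl_pos (R : realType) (m : nat) (v : 'rV[R]_m) i :
  v 0 i != 0 -> 0 < eucl_norm v.
Proof.
move=> hv; rewrite /eucl_norm sqrtr_gt0 (bigD1 i) //=.
have h1 : 0 < v 0 i ^+ 2 by rewrite lt_def sqrf_eq0 hv sqr_ge0.
apply: (lt_le_trans h1); rewrite lerDl; apply: sumr_ge0 => j _; exact: sqr_ge0.
Qed.

Lemma ptZ (R : realType) (n : nat) (k : R) (x : 'rV[R]_n) s :
  k *: pt x s = pt (k *: x) (k * s).
Proof.
rewrite /pt scale_row_mx; congr row_mx; apply/rowP => i; rewrite !mxE //.
Qed.

Lemma ptD (R : realType) (n : nat) (x y : 'rV[R]_n) s t :
  pt x s + pt y t = pt (x + y) (s + t).
Proof.
rewrite /pt add_row_mx; congr row_mx; apply/rowP => i; rewrite !mxE //.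
Qed.

Theorem propositionA5 (R : realType) (n : nat) (hn : (1 <= n)%N)
  (Phi : 'rV[R]_(n + 1) -> R) (hPhi : is_norm Phi) :
  partially_monotone Phi <->
  exists omega : R -> R -> R,
    quadrant_ok omega /\
    forall (xh : 'rV[R]_n) (s : R), Phi (pt xh s) = omega (Phi (pt xh 0)) `|s|.
Proof.
case: hPhi => Hnn Hconv Hhom [c c0 Hc].
have P0s : forall s, Phi (pt 0 s) = `|s| * Phi (pt 0 1).
  move=> s; rewrite -Hhom ptZ scaler0 mulr1 //.
have P1 : 0 < Phi (pt 0 1).
  apply: (lt_le_trans _ (Hc _)); apply: mulr_gt0 => //.
  apply: (@eucl_pos _ _ _ (rshift n (0 : 'I_1))).
  by rewrite /pt row_mxEr mxE oner_neq0.
have Pk0 : forall (k : R) x, Phi (pt (k *: x) 0) = `|k| * Phi (pt x 0).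
  move=> k x; rewrite -Hhom ptZ mulr0 //.
split.
- move=> Hpm.
  pose e : 'rV[R]_n := const_mx 1.
  pose A := Phi (pt e 0).
  have A0 : 0 < A.
    apply: (lt_le_trans _ (Hc _)); apply: mulr_gt0 => //.
    apply: (@eucl_pos _ _ _ (lshift 1 (Ordinal hn))).
    by rewrite /pt row_mxEl mxE oner_neq0.
  have omE : forall s1, 0 <= s1 -> Phi (pt ((s1 / A) *: e) 0) = s1.
    move=> s1 hs1; rewrite Pk0 ger0_norm; last by rewrite divr_ge0 // ltW.
    by rewrite /A divfK // gt_eqF.
  exists (fun s1 s2 => Phi (pt ((s1 / A) *: e) s2)); split.
  + split.
    * by move=> *; apply: Hnn.
    * move=> l s1 s2 l0 _ _.
      by rewrite -[l in RHS](ger0_norm (ltW l0)) -Hhom ptZ scalerA mulrA.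
    * move=> s1 s2 t1 t2 a _ _ _ _ a0 a1.
      have -> : pt (((a * s1 + (1 - a) * t1) / A) *: e) (a * s2 + (1 - a) * t2)
        = a *: pt ((s1 / A) *: e) s2 + (1 - a) *: pt ((t1 / A) *: e) t2.
        rewrite !ptZ ptD !scalerA -scalerDl mulrDl !mulrA //.
      exact: Hconv.
    * split; last by rewrite mul0r scale0r P0s normr1 mul1r.
      by rewrite omE ?ltr01.
    * move=> s1 s2 t1 t2 hs1 st1 hs2 st2.
      apply: (Hpm ((s1/A) *: e) ((t1/A) *: e) s2 t2).
        rewrite (omE s1) // (omE t1) //; exact: le_trans st1.
      rewrite (P0s s2) (P0s t2); apply: ler_wpM2r; first exact: ltW P1.
      rewrite !ger0_norm //; exact: le_trans st2.
  + move=> xh s.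
    have h1 : Phi (pt ((Phi (pt xh 0) / A) *: e) 0) = Phi (pt xh 0).
      by rewrite omE // Hnn.
    have h2 : Phi (pt 0 s) = Phi (pt 0 `|s|) by rewrite (P0s s) (P0s `|s|) normr_id.
    apply/le_anti/andP; split.
      apply: (Hpm xh ((Phi (pt xh 0) / A) *: e) s `|s|); by rewrite ?h1 ?h2.
    apply: (Hpm ((Phi (pt xh 0) / A) *: e) xh `|s| s); by rewrite ?h1 ?h2.
- case=> om [[Hom0 Homh Homc [Om1 Om2] Homm] Hrep] xh yh s t h1 h2.
  rewrite (Hrep xh s) (Hrep yh t); apply: Homm => //.
  rewrite (P0s s) (P0s t) in h2.
  by rewrite -(ler_pM2r P1).
Qed.
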